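(* For every $\delta>0$ there exist $n\ge1$, a pool $\mathcal D=\{(p_i,t_i)\}_{i=1}^n$ with $p_i\in[0,1]$, $t_i>0$, and a budget $T>0$, such that the greedy backward selection strategy based on the usefulness values $u_i=p_i/t_i$ (defined in the context) outputs an ensemble $S$ with majority-voting accuracy $q(S)\le 1/2+\delta$, while there is an index set $\mathcal L\subseteq\{1,\dots,n\}$ with $\sum_{i\in\mathcal L}t_i\le T$ and $q(\mathcal L)\ge 1-\delta$; i.e., its error (optimal constrained accuracy minus output accuracy) can be arbitrarily close to $1/2$.
   Context: A pool consists of candidate members $i=1,\dots,n$, each with accuracy $p_i\in[0,1]$ and cost $t_i>0$; a budget $T>0$ is given; the usefulness of member $i$ is $u_i=p_i/t_i$. For a nonempty index set $\mathcal L$ with $|\mathcal L|=\ell$, the (majority voting) accuracy is $q(\mathcal L)=\sum_{k=\lfloor \ell/2\rfloor+1}^{\ell}\sum_{\mathcal I\subseteq\mathcal L,|\mathcal I|=k}\prod_{i\in\mathcal I}p_i\prod_{j\in\mathcal L\setminus\mathcal I}(1-p_j)$. Greedy backward selection by usefulness: start with $S=\{1,\dots,n\}$; while $\sum_{i\in S}t_i>T$ and $|S|>1$, remove from $S$ a member with smallest usefulness $u_i$; afterwards, while $|S|>1$ and removing a member of smallest usefulness strictly increases $q(S)$, remove it; output $S$. *)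

(* Defs.v *)
From HB Require Import structures.
From mathcomp Require Import all_boot all_order all_algebra.
From mathcomp Require Import reals.
Set Implicit Arguments. Unset Strict Implicit. Unset Printing Implicit Defensive.
Import Order.TTheory GRing.Theory Num.Theory.
Local Open Scope ring_scope.

Section Ensemble.
Variables (R : realType) (n : nat).
Implicit Types (p t : 'I_n -> R) (S L : {set 'I_n}).

(* majority-voting accuracy: sum over I ⊆ L with |I| >= floor(|L|/2)+1,
   i.e. 2|I| > |L| *)
Definition q p L : R :=
  \sum_(I in powerset L | (#|L| < 2 * #|I|)%N)
     ((\prod_(i in I) p i) * \prod_(j in L :\: I) (1 - p j)).

Definition cost t S : R := \sum_(i in S) t i.

Definition usefulness p t (i : 'I_n) : R := p i / t i.

Definition min_use p t S (i : 'I_n) : Prop :=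
  i \in S /\ forall j, j \in S -> usefulness p t i <= usefulness p t j.

(* second phase: while |S|>1 and removing a member of smallest usefulness
   strictly increases q(S), remove it.  Ties are resolved arbitrarily
   (the relation covers every tie-breaking rule). *)
Inductive phase2 p t : {set 'I_n} -> {set 'I_n} -> Prop :=
| ph2_single S : (#|S| <= 1)%N -> phase2 p t S S
| ph2_stop S i : (1 < #|S|)%N -> min_use p t S i -> q p (S :\ i) <= q p S ->
    phase2 p t S S
| ph2_step S i S' : (1 < #|S|)%N -> min_use p t S i -> q p S < q p (S :\ i) ->
    phase2 p t (S :\ i) S' -> phase2 p t S S'.

Inductive phase1 p t (T : R) : {set 'I_n} -> {set 'I_n} -> Prop :=
| ph1_stop S S' : ~ (T < cost t S /\ (1 < #|S|)%N) -> phase2 p t S S' ->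
    phase1 p t T S S'
| ph1_step S i S' : T < cost t S -> (1 < #|S|)%N -> min_use p t S i ->
    phase1 p t T (S :\ i) S' -> phase1 p t T S S'.

Definition greedy_output p t (T : R) S : Prop := phase1 p t T setT S.

End Ensemble.

(* Main.v *)
Require Import Defs.
From HB Require Import structures.
From mathcomp Require Import all_boot all_order all_algebra.
From mathcomp Require Import reals.
From mathcomp Require Import ring lra.
Import Order.TTheory GRing.Theory Num.Theory.
Local Open Scope ring_scope.

Lemma q_set1 (R : realType) n (p : 'I_n -> R) i : q p [set i] = p i.
Proof.
rewrite /q (big_pred1 [set i]).
  by rewrite big_set1 setDv big_set0 mulr1.
move=> I /=; rewrite powersetE cards1.
apply/andP/eqP => [[]|->]; last by rewrite subxx cards1.
rewrite subset1 => /orP[/eqP //|/eqP ->]; by rewrite cards0.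
Qed.

Lemma costT (R : realType) (t : 'I_2 -> R) : cost t [set: 'I_2] = t ord0 + t ord_max.
Proof. rewrite /cost (eq_bigl xpredT) => [|i]; rewrite ?in_setT // !big_ord_recl big_ord0 addr0; congr (_ + t _); exact/val_inj. Qed.

Definition pp (R : realType) (i : 'I_2) : R := if val i == 0%N then 1 else 1/2.
Definition tt (R : realType) (i : 'I_2) : R := if val i == 0%N then 1 else 1/4.

Lemma setT_minus (i : 'I_2) : val i = 0%N -> [set: 'I_2] :\ i = [set ord_max].
Proof.
move=> hi; apply/setP => j; rewrite !inE andbT.
case: j => [[|[|k]] hk]; case: i hi => [m hm] /= hm0; subst m => //.
Qed.

Lemma out_char (R : realType) S : greedy_output (@pp R) (@tt R) 1 S -> S = [set ord_max].
Proof.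
rewrite /greedy_output => h.
have cT : cost (@tt R) [set: 'I_2] = 5/4.
  by rewrite costT /tt /=; field.
have c2 : #|[set: 'I_2]| = 2%N by rewrite cardsT card_ord.
inversion h as [S0 S' hn _ E1 E2|S0 i S' _ _ hm h1 E1 E2]; subst.
  exfalso; apply: hn; split; last by rewrite c2.
  by rewrite cT; lra.
have hi : val i = 0%N.
  case: hm => _ /(_ ord0 (in_setT _)); rewrite /usefulness /pp /tt /=.
  case: i {h h1} => [[|[|k]] hk] //= H; exfalso; move: H; rewrite /=; lra.
rewrite setT_minus // in h1.
have c1 : #|[set (@ord_max 1)]| = 1%N by rewrite cards1.
inversion h1 as [S0 S' _ h2 E1 E2|S0 j S' _ hc]; subst; last by rewrite c1 in hc.
inversion h2 as [S0 _ E1 E2|S0 j _ hc|S0 j S'' hc]; subst => //; by rewrite c1 in hc.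
Qed.

Theorem proposition3 (R : realType) (delta : R) (hdelta : 0 < delta) :
  exists (n : nat) (p t : 'I_n -> R) (T : R),
    [/\ (0 < n)%N,
        (forall i, 0 <= p i <= 1),
        (forall i, 0 < t i),
        0 < T &
    [/\ (exists S, greedy_output p t T S),
        (forall S, greedy_output p t T S -> q p S <= 1 / 2 + delta) &
        (exists L : {set 'I_n},
            [/\ L != set0, cost t L <= T & 1 - delta <= q p L])]].
Proof.
exists 2%N, (@pp R), (@tt R), 1; split => //.
- by move=> i; rewrite /pp; case: ifP => _; apply/andP; split; lra.
- by move=> i; rewrite /tt; case: ifP => _; lra.
split.
- exists [set ord_max].
  apply: (@ph1_step _ _ _ _ _ [set: 'I_2] ord0).
  + by rewrite costT /tt /=; lra.
  + by rewrite cardsT card_ord.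
  + split; first exact: in_setT.
    move=> j _; rewrite /usefulness /pp /tt /=.
    case: j => [[|[|k]] hk] //=; lra.
  + rewrite setT_minus //; apply: ph1_stop; last by apply: ph2_single; rewrite cards1.
    by rewrite cards1 => -[].
- move=> S /out_char ->; rewrite q_set1 /pp /=; lra.
- exists [set ord0]; split.
  + by apply/set0Pn; exists ord0; rewrite inE.
  + by rewrite /cost big_set1 /tt /=; lra.
  + by rewrite q_set1 /pp /=; lra.
Qed.
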